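(* Let $\Gamma=(\mathcal{V},\mathcal{H})$ be an $(l,r)$-hyperflower on $N$ vertices with peripheral vertices $v_1,\ldots,v_l$. Let $\hat{\Gamma}=(\hat{\mathcal{V}},\hat{\mathcal{H}})$ be the $(1,r)$-hyperflower defined by $\hat{\mathcal{V}}:=\mathcal{V}\setminus\{v_2,\ldots,v_l\}$ and $\hat{\mathcal{H}}:=\{h\in\mathcal{H}: v_2,\ldots,v_l\notin h\}$. Then the spectrum of $\Gamma$ is given by the $N-l+1$ eigenvalues of $\hat{\Gamma}$ (counted with multiplicity) together with the eigenvalue $1$ with multiplicity at least $l-1$; that is, the eigenvalues of $\Gamma$ counted with multiplicity are those of $\hat\Gamma$ together with $l-1$ further eigenvalues equal to $1$.
   Context: A hypergraph $\Gamma=(\mathcal{V},\mathcal{H})$ has a finite vertex set $\mathcal{V}$ and a set $\mathcal{H}$ of nonempty subsets of $\mathcal{V}$ (hyperedges); standing assumption: no isolated vertices. $\deg(v)$ is the number of hyperedges containing $v$, $D$ the diagonal degree matrix, $A$ the matrix with $A_{ii}=0$ and $A_{ij}=-\#\{h\in\mathcal{H}: v_i,v_j\in h\}$ for $i\ne j$, and the spectrum of $\Gamma$ is the spectrum of its (signless) normalized Laplacian $L=\mathrm{Id}-D^{-1}A$. An $(l,r)$-hyperflower is a hypergraph whose vertex set is $\mathcal{V}=U\sqcup\mathcal{W}$ with $U=\{v_1,\ldots,v_l\}$ (peripheral vertices) and such that there are $r$ pairwise disjoint nonempty sets $h_1,\ldots,h_r\subseteq\mathcal{W}$ with $\mathcal{H}=\{h_i\cup\{v_j\}: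 i=1,\ldots,r,\ j=1,\ldots,l\}$ (by the no-isolated-vertex assumption, $\mathcal{W}=h_1\cup\cdots\cup h_r$). *)

(* Defs.v *)
From HB Require Import structures.
From mathcomp Require Import all_boot all_order all_algebra.
Set Implicit Arguments. Unset Strict Implicit. Unset Printing Implicit Defensive.
Import Order.TTheory GRing.Theory Num.Theory.
Local Open Scope ring_scope.

(* A hypergraph is given by a vertex set S (a finite subset of a finType T)
   and a set H of hyperedges (subsets of S).  Vertices of S are indexed by
   'I_#|S| through enum_val. *)
Section Hypergraph.
Variables (T : finType) (R : fieldType).

Definition hg_vtx (S : {set T}) (i : 'I_#|S|) : T := @enum_val T (pred_of_set S) i.

Definition hg_deg (H : {set {set T}}) (v : T) : nat := #|[set h in H | v \in h]|.

Definition hg_cnt (H : {set {set T}}) (u w : T) : nat :=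
  #|[set h in H | (u \in h) && (w \in h)]|.

Definition hg_D (S : {set T}) (H : {set {set T}}) : 'M[R]_#|S| :=
  \matrix_(i, j) (if i == j then (hg_deg H (hg_vtx i))%:R else 0).

Definition hg_A (S : {set T}) (H : {set {set T}}) : 'M[R]_#|S| :=
  \matrix_(i, j) (if i == j then 0 else - (hg_cnt H (hg_vtx i) (hg_vtx j))%:R).

Definition hg_L (S : {set T}) (H : {set {set T}}) : 'M[R]_#|S| :=
  1%:M - invmx (hg_D S H) *m hg_A S H.

(* The (l,r)-hyperflower with peripheral vertices v 0, ..., v (l-1)
   and petals hs 0, ..., hs (r-1). *)
Definition flower_V (l r : nat) (v : 'I_l -> T) (hs : 'I_r -> {set T}) : {set T} :=
  [set v j | j : 'I_l] :|: \bigcup_(i < r) hs i.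

Definition flower_H (l r : nat) (v : 'I_l -> T) (hs : 'I_r -> {set T}) : {set {set T}} :=
  [set hs i :|: [set v j] | i : 'I_r, j : 'I_l].

End Hypergraph.

(* Main.v *)
Require Import Defs.
From HB Require Import structures.
From mathcomp Require Import all_boot all_order all_algebra.
Set Implicit Arguments. Unset Strict Implicit. Unset Printing Implicit Defensive.
Import Order.TTheory GRing.Theory Num.Theory.
Local Open Scope ring_scope.

Lemma sylv (R : comNzRingType) n m (U : 'M[R]_(n, m)) (W : 'M[R]_(m, n)) (y : R) :
  y ^+ n * \det (y%:M - W *m U) = y ^+ m * \det (y%:M - U *m W).
Proof.
pose M := block_mx (y%:M : 'M_n) U W (1%:M : 'M_m).
pose P := block_mx (1%:M : 'M_n) 0 (- W) (y%:M : 'M_m).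
have dP : \det P = y ^+ m by rewrite det_lblock det1 det_scalar mul1r.
have e1 : P *m M = block_mx (y%:M) U 0 (y%:M - W *m U).
  rewrite mulmx_block !mul1mx !mul0mx !addr0 mulNmx mul_mx_scalar mul_scalar_mx mulmx1.
  by rewrite addNr addrC mulNmx.
have e2 : M *m P = block_mx (y%:M - U *m W) (y *: U) 0 (y%:M).
  rewrite mulmx_block !mulmx1 !mulmx0 !add0r mulmxN mul_mx_scalar mul_scalar_mx mul1mx.
  by rewrite scale1r addrN addrC.
have := congr1 determinant e1; rewrite det_mulmx det_ublock det_scalar dP => h1.
have := congr1 determinant e2; rewrite det_mulmx det_ublock det_scalar dP => h2.
by rewrite -h1 mulrC h2 mulrC.
Qed.

Lemma cp_shift (R : comNzRingType) n (B : 'M[R]_n) :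
  char_poly (1%:M + B) = \det (('X - 1)%:M - map_mx polyC B).
Proof.
rewrite /char_poly /char_poly_mx map_mxD map_mx1 opprD addrA; congr (\det (_ - _)).
by rewrite raddfB.
Qed.

Lemma cp_sylv (R : idomainType) n m k (U : 'M[R]_(n, m)) (W : 'M[R]_(m, n)) :
  n = (m + k)%N ->
  char_poly (1%:M + U *m W) = ('X - 1) ^+ k * char_poly (1%:M + W *m U).
Proof.
move=> enk; subst n; rewrite !cp_shift !map_mxM.
have hy : ('X - 1 : {poly R}) ^+ m != 0.
  by rewrite expf_neq0 // polyXsubC_eq0.
apply: (mulfI hy); rewrite -sylv exprD -mulrA mulrCA mulrA.
done.
Qed.

Section HG.
Variables (R : fieldType) (T : finType).

Definition ee (H : {set {set T}}) (x y : T) : R :=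
  if x == y then 0 else (hg_cnt H x y)%:R / (hg_deg H x)%:R.

Lemma hg_LE (S : {set T}) (H : {set {set T}}) :
  (forall x, x \in S -> (hg_deg H x)%:R != 0 :> R) ->
  hg_L R S H = 1%:M + \matrix_(i, j) ee H (hg_vtx i) (hg_vtx j).
Proof.
move=> hd.
pose d : 'rV[R]_#|S| := \row_i (hg_deg H (hg_vtx i))%:R.
pose di : 'rV[R]_#|S| := \row_i ((hg_deg H (hg_vtx i))%:R)^-1.
have eD : hg_D R S H = diag_mx d.
  by apply/matrixP => i j; rewrite !mxE; case: eqP => [->|]; rewrite ?mulr1n ?mulr0n.
have e1 : diag_mx di *m diag_mx d = 1%:M.
  rewrite mulmx_diag -diag_const_mx; congr diag_mx; apply/matrixP => i j.
  by rewrite !mxE mulVf // hd // /hg_vtx enum_valP.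
have [uD _] := mulmx1_unit (mulmx1C e1).
have eI : invmx (hg_D R S H) = diag_mx di.
  by rewrite eD -[invmx _]mulmx1 -(mulmx1C e1) mulmxA mulVmx ?mul1mx // -eD.
rewrite /hg_L eI mul_diag_mx; apply/matrixP => i j.
rewrite !mxE /ee (inj_eq enum_val_inj); case: eqP => _; first by rewrite mulr0 subr0 addr0.
by rewrite mulrN opprK mulrC add0r.
Qed.

Lemma reduce (S S' : {set T}) (H H' : {set {set T}}) (pi : T -> T) (k : nat) :
  {in S, forall x, pi x \in S'} ->
  {in S &, forall x x', ee H x x' = ee H (pi x) x'} ->
  {in S' &, forall y y', ee H' y y' = \sum_(x in S | pi x == y') ee H y x} ->
  #|S| = (#|S'| + k)%N ->
  char_poly (1%:M + \matrix_(i, j) ee H (@hg_vtx T S i) (hg_vtx j)) =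
  ('X - 1) ^+ k * char_poly (1%:M + \matrix_(i, j) ee H' (@hg_vtx T S' i) (hg_vtx j)).
Proof.
move=> hpi ha hb hk.
pose U : 'M[R]_(#|S|, #|S'|) := \matrix_(i, k) (pi (hg_vtx i) == hg_vtx k)%:R.
pose W : 'M[R]_(#|S'|, #|S|) := \matrix_(k, j) ee H (hg_vtx k) (hg_vtx j).
have e1 : \matrix_(i, j) ee H (@hg_vtx T S i) (hg_vtx j) = U *m W.
  apply/matrixP => i j; rewrite !mxE.
  under eq_bigr do rewrite !mxE.
  rewrite -(big_enum_val (fun y => (pi (hg_vtx i) == y)%:R * ee H y (hg_vtx j))) /=.
  have hi : pi (hg_vtx i) \in S' by apply: hpi; rewrite /hg_vtx enum_valP.
  rewrite (bigD1 (pi (hg_vtx i))) //= eqxx mul1r big1 ?addr0.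
    by apply: ha; rewrite /hg_vtx enum_valP.
  by move=> y /andP[_ /negPf]; rewrite eq_sym => ->; rewrite mul0r.
have e2 : \matrix_(i, j) ee H' (@hg_vtx T S' i) (hg_vtx j) = W *m U.
  apply/matrixP => i j; rewrite !mxE.
  under eq_bigr do rewrite !mxE.
  rewrite -(big_enum_val (fun x => ee H (hg_vtx i) x * (pi x == hg_vtx j)%:R)) /=.
  rewrite hb ?/hg_vtx ?enum_valP // big_mkcondr /=; apply: eq_bigr => x _.
  by case: eqP; rewrite ?mulr1 ?mulr0.
rewrite e1 e2; exact: cp_sylv.
Qed.
End HG.
Section Flower.
Variables (R : realFieldType) (T : finType) (l r : nat).
Hypotheses (l_gt0 : (0 < l)%N) (r_gt0 : (0 < r)%N).
Variables (v : 'I_l -> T) (hs : 'I_r -> {set T}).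
Hypotheses (v_inj : injective v)
    (hs_nonempty : forall i, hs i != set0)
    (hs_disj : forall i i', i != i' -> [disjoint hs i & hs i'])
    (v_notin_hs : forall i j, v j \notin hs i).

Let j1 := Ordinal l_gt0.
Definition f (p : 'I_r * 'I_l) := hs p.1 :|: [set v p.2].
Definition g (i : 'I_r) := f (i, j1).

Lemma memv a p : (v a \in f p) = (p.2 == a).
Proof. by rewrite /f !inE (negbTE (v_notin_hs _ _)) (inj_eq v_inj) eq_sym. Qed.

Lemma hs_uniq w i i0 : w \in hs i0 -> (w \in hs i) = (i == i0).
Proof.
move=> wi0; case: eqP => [->//|/eqP ne].
by rewrite (disjointFl (hs_disj ne) wi0).
Qed.

Lemma w_notv w i0 a : w \in hs i0 -> w != v a.
Proof. by move=> wi; apply/eqP => e; move: wi; rewrite e (negbTE (v_notin_hs _ _)). Qed.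

Lemma memw w i0 p : w \in hs i0 -> (w \in f p) = (p.1 == i0).
Proof.
move=> wi; rewrite /f !inE (hs_uniq _ wi) (negbTE (w_notv _ wi)) orbF //.
Qed.

Lemma f_inj : injective f.
Proof.
move=> [i j] [i' j'] e.
have ej : j = j'.
  by apply/eqP; rewrite eq_sym -(memv j (i', j')) -e memv /=.
have /set0Pn [w wi] := hs_nonempty i.
have ei : i' = i by apply/eqP; rewrite -(memw (i', j') wi) -e (memw (i, j) wi).
by rewrite ej ei.
Qed.

Lemma g_inj : injective g.
Proof. by move=> i i' /f_inj [->]. Qed.

Lemma card_inj_sub (I : finType) (F : I -> {set T}) (P : pred {set T}) :
  injective F -> #|[set h in F @: setT | P h]| = #|[set p | P (F p)]|.
Proof.
move=> Fi; rewrite -(card_imset _ Fi); apply: eq_card => h; rewrite !inE.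
apply/andP/imsetP => [[/imsetP[p _ ->] Ph]|[p]]; first by exists p; rewrite // inE.
by rewrite inE => Pp ->; split => //; apply: imset_f.
Qed.

Lemma card_prod (I J : finType) (A : pred I) (B : pred J) :
  #|[set p : I * J | A p.1 && B p.2]| = (#|[set i | A i]| * #|[set j | B j]|)%N.
Proof. by rewrite -cardsX; apply: eq_card => -[i j]; rewrite !inE. Qed.

Definition HH := flower_H v hs.
Definition HHat := [set h in HH | [forall j : 'I_l, (j != j1) ==> (v j \notin h)]].
Definition VV := flower_V v hs.
Definition VHat := VV :\: [set v j | j in [set j : 'I_l | j != j1]].

Lemma HH_E : HH = f @: setT.
Proof.
apply/setP => h; apply/imset2P/imsetP => [[i j _ _ ->]|[[i j] _ ->]].
  by exists (i, j).
by exists i j.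
Qed.

Lemma HHat_E : HHat = g @: setT.
Proof.
apply/setP => h; rewrite inE HH_E; apply/andP/imsetP => [[/imsetP[[i j] _ ->]]|[i _ ->]].
  move/forallP => /(_ j); rewrite memv eqxx implybF negbK => /eqP ->.
  by exists i.
split; first exact: imset_f.
by apply/forallP => j; apply/implyP => nj; rewrite memv eq_sym.
Qed.

Lemma cntH x y : hg_cnt HH x y = #|[set p | (x \in f p) && (y \in f p)]|.
Proof. by rewrite /hg_cnt HH_E card_inj_sub //; exact: f_inj. Qed.

Lemma cntHh x y : hg_cnt HHat x y = #|[set i | (x \in g i) && (y \in g i)]|.
Proof. by rewrite /hg_cnt HHat_E card_inj_sub //; exact: g_inj. Qed.


Lemma cardsT' n : #|[set i : 'I_n | true]| = n.
Proof. by rewrite -[RHS](card_ord n); apply: eq_card => i; rewrite inE. Qed.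

Lemma cards1' n (a : 'I_n) : #|[set i : 'I_n | i == a]| = 1%N.
Proof. by rewrite -(cards1 a); apply: eq_card => i; rewrite !inE. Qed.

Lemma deg_cnt (H : {set {set T}}) x : hg_deg H x = hg_cnt H x x.
Proof. by rewrite /hg_deg /hg_cnt; apply: eq_card => h; rewrite !inE andbb. Qed.

Lemma deg_v a : hg_deg HH (v a) = r.
Proof.
rewrite deg_cnt cntH.
transitivity #|[set p : 'I_r * 'I_l | true && (p.2 == a)]|.
  by apply: eq_card => p; rewrite in_set !memv andbb !inE.
by rewrite (card_prod (fun=> true) (fun j => j == a)) cardsT' cards1' muln1.
Qed.

Lemma deg_w w i0 : w \in hs i0 -> hg_deg HH w = l.
Proof.
move=> wi; rewrite deg_cnt cntH.
transitivity #|[set p : 'I_r * 'I_l | (p.1 == i0) && true]|.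
  by apply: eq_card => p; rewrite in_set !(memw _ wi) andbb !inE andbT.
by rewrite (card_prod (fun i => i == i0) (fun=> true)) cardsT' cards1' mul1n.
Qed.

Lemma cnt_vv a b : a != b -> hg_cnt HH (v a) (v b) = 0%N.
Proof.
move=> nab; rewrite cntH; apply/eqP; rewrite cards_eq0; apply/eqP/setP => p.
rewrite in_set !memv inE; case: eqP => // ->; exact: negbTE.
Qed.

Lemma cnt_vw a w i0 : w \in hs i0 -> hg_cnt HH (v a) w = 1%N.
Proof.
move=> wi; rewrite cntH.
transitivity #|[set p : 'I_r * 'I_l | (p.1 == i0) && (p.2 == a)]|.
  by apply: eq_card => p; rewrite in_set memv (memw _ wi) !inE andbC.
by rewrite (card_prod (fun i => i == i0) (fun j => j == a)) !cards1'.
Qed.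

Lemma cnt_wv a w i0 : w \in hs i0 -> hg_cnt HH w (v a) = 1%N.
Proof.
move=> wi; rewrite -(cnt_vw a wi) !cntH; apply: eq_card => p; rewrite !inE andbC //.
Qed.

Lemma cnt_ww w w' i0 i1 : w \in hs i0 -> w' \in hs i1 ->
  hg_cnt HH w w' = ((i0 == i1) * l)%N.
Proof.
move=> wi wi'; rewrite cntH.
transitivity #|[set p : 'I_r * 'I_l | ((p.1 == i0) && (i0 == i1)) && true]|.
  apply: eq_card => p; rewrite in_set (memw _ wi) (memw _ wi') !inE andbT.
  by case: eqP => // ->.
rewrite (card_prod (fun i => (i == i0) && (i0 == i1)) (fun=> true)) cardsT'; case: eqP => _ /=.
  by rewrite (eq_card (B := [set i | i == i0])) ?cards1' // => i; rewrite !inE andbT.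
by rewrite (_ : [set _ | _] = set0) ?cards0 //; apply/setP => i; rewrite !inE andbF.
Qed.

Lemma memg_v i : v j1 \in g i.
Proof. by rewrite /g memv. Qed.

Lemma memg_w w i0 i : w \in hs i0 -> (w \in g i) = (i == i0).
Proof. by move=> wi; rewrite /g (memw _ wi). Qed.

Lemma degh_v : hg_deg HHat (v j1) = r.
Proof.
rewrite deg_cnt cntHh -[RHS](cardsT' r); apply: eq_card => i.
by rewrite in_set memg_v !inE.
Qed.

Lemma degh_w w i0 : w \in hs i0 -> hg_deg HHat w = 1%N.
Proof.
move=> wi; rewrite deg_cnt cntHh -(cards1' i0); apply: eq_card => i.
by rewrite in_set (memg_w _ wi) andbb !inE.
Qed.

Lemma cnth_vw w i0 : w \in hs i0 -> hg_cnt HHat (v j1) w = 1%N.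
Proof.
move=> wi; rewrite cntHh -(cards1' i0); apply: eq_card => i.
by rewrite in_set (memg_w _ wi) memg_v !inE.
Qed.

Lemma cnth_wv w i0 : w \in hs i0 -> hg_cnt HHat w (v j1) = 1%N.
Proof.
move=> wi; rewrite cntHh -(cards1' i0); apply: eq_card => i.
by rewrite in_set (memg_w _ wi) memg_v andbT !inE.
Qed.

Lemma cnth_ww w w' i0 i1 : w \in hs i0 -> w' \in hs i1 ->
  hg_cnt HHat w w' = (i0 == i1 : nat).
Proof.
move=> wi wi'; rewrite cntHh.
have [e|ne] := eqVneq i0 i1.
  subst i1.
  by rewrite /= -(cards1' i0); apply: eq_card => i; rewrite in_set !(memg_w _ wi) (memg_w _ wi') andbb !inE.
rewrite /=.
apply/eqP; rewrite cards_eq0; apply/eqP/setP => i; rewrite in_set (memg_w _ wi) (memg_w _ wi') inE.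
by case: eqP => // ->; rewrite (negbTE ne).
Qed.


Lemma natr_neq0 n : (0 < n)%N -> (n%:R : R) != 0.
Proof. by rewrite pnatr_eq0 -lt0n. Qed.

Lemma ee_vv a b : ee R HH (v a) (v b) = 0.
Proof.
rewrite /ee; case: eqP => // /eqP; rewrite (inj_eq v_inj) => nab.
by rewrite cnt_vv // mul0r.
Qed.

Lemma ee_vw a w i0 : w \in hs i0 -> ee R HH (v a) w = r%:R^-1.
Proof.
move=> wi; rewrite /ee eq_sym (negbTE (w_notv a wi)) (cnt_vw a wi) deg_v.
by rewrite mul1r.
Qed.

Lemma ee_wv a w i0 : w \in hs i0 -> ee R HH w (v a) = l%:R^-1.
Proof.
move=> wi; rewrite /ee (negbTE (w_notv a wi)) (cnt_wv a wi) (deg_w wi).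
by rewrite mul1r.
Qed.

Lemma ee_ww w w' i0 i1 : w \in hs i0 -> w' \in hs i1 ->
  ee R HH w w' = if w == w' then 0 else (i0 == i1)%:R.
Proof.
move=> wi wi'; rewrite /ee (cnt_ww wi wi') (deg_w wi) natrM mulfK //.
exact: natr_neq0.
Qed.

Lemma eeh_vv : ee R HHat (v j1) (v j1) = 0.
Proof. by rewrite /ee eqxx. Qed.

Lemma eeh_vw w i0 : w \in hs i0 -> ee R HHat (v j1) w = r%:R^-1.
Proof.
move=> wi; rewrite /ee eq_sym (negbTE (w_notv j1 wi)) (cnth_vw wi) degh_v.
by rewrite mul1r.
Qed.

Lemma eeh_wv w i0 : w \in hs i0 -> ee R HHat w (v j1) = 1.
Proof.
move=> wi; rewrite /ee (negbTE (w_notv j1 wi)) (cnth_wv wi) (degh_w wi).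
by rewrite divr1.
Qed.

Lemma eeh_ww w w' i0 i1 : w \in hs i0 -> w' \in hs i1 ->
  ee R HHat w w' = if w == w' then 0 else (i0 == i1)%:R.
Proof.
by move=> wi wi'; rewrite /ee (cnth_ww wi wi') (degh_w wi) divr1.
Qed.

Definition pi (x : T) := if [exists a, x == v a] then v j1 else x.

Lemma pi_v a : pi (v a) = v j1.
Proof. by rewrite /pi (_ : [exists _, _] = true) //; apply/existsP; exists a. Qed.

Lemma pi_w w i0 : w \in hs i0 -> pi w = w.
Proof.
move=> wi; rewrite /pi (_ : [exists _, _] = false) //; apply/negbTE/existsP => -[a].
by rewrite (negbTE (w_notv a wi)).
Qed.

Lemma VV_v a : v a \in VV.
Proof. by rewrite /VV /flower_V inE; apply/orP; left; apply: imset_f. Qed.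

Lemma VV_w w i0 : w \in hs i0 -> w \in VV.
Proof. by move=> wi; rewrite /VV /flower_V inE; apply/orP; right; apply/bigcupP; exists i0. Qed.

Lemma VV_cases x : x \in VV -> (exists a, x = v a) \/ (exists i0, x \in hs i0).
Proof.
rewrite /VV /flower_V inE => /orP[/imsetP[a _ ->]|/bigcupP[i _ xi]].
  by left; exists a.
by right; exists i.
Qed.

Lemma VHat_sub : {subset VHat <= VV}.
Proof. by move=> x; rewrite /VHat inE => /andP[]. Qed.

Lemma VHat_v : v j1 \in VHat.
Proof.
rewrite /VHat inE VV_v andbT; apply/imsetP => -[a]; rewrite inE => na /v_inj e.
by move: na; rewrite e eqxx.
Qed.

Lemma VHat_w w i0 : w \in hs i0 -> w \in VHat.
Proof.
move=> wi; rewrite /VHat inE (VV_w wi) andbT; apply/imsetP => -[a _ e].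
by move: (w_notv a wi); rewrite e eqxx.
Qed.

Lemma VHat_cases y : y \in VHat -> y = v j1 \/ (exists i0, y \in hs i0).
Proof.
move=> yV; case: (VV_cases (VHat_sub yV)) => [[a ea]|]; last by right.
left; rewrite ea; case: (eqVneq a j1) => [->//|na].
by move: yV; rewrite /VHat inE ea; case/andP => /imsetP []; exists a; rewrite ?inE.
Qed.

Lemma cond_a : {in VV &, forall x x', ee R HH x x' = ee R HH (pi x) x'}.
Proof.
move=> x x' xV x'V; case: (VV_cases xV) => [[a ->]|[i0 xi]]; last by rewrite (pi_w xi).
rewrite pi_v; case: (VV_cases x'V) => [[b ->]|[i1 xi]]; first by rewrite !ee_vv.
by rewrite !(ee_vw _ xi).
Qed.

Lemma sum_vj1 (F : T -> R) :
  \sum_(x in VV | pi x == v j1) F x = \sum_(a < l) F (v a).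
Proof.
rewrite (eq_bigl (mem (v @: setT))); last first.
  move=> x /=; case: (boolP (x \in VV)) => xV /=.
    case: (VV_cases xV) => [[a ->]|[i0 xi]]; first by rewrite pi_v eqxx imset_f.
    rewrite (pi_w xi) (negbTE (w_notv _ xi)); apply/esym/negbTE/imsetP => -[a _ e].
    by move: (w_notv a xi); rewrite e eqxx.
  by apply/esym/negbTE/imsetP => -[a _ e]; move: xV; rewrite e VV_v.
by rewrite big_imset //=; [apply: eq_bigl => a; rewrite inE | move=> a b _ _; exact: v_inj].
Qed.

Lemma cond_b : {in VHat &, forall y y',
  ee R HHat y y' = \sum_(x in VV | pi x == y') ee R HH y x}.
Proof.
move=> y y' yV y'V; case: (VHat_cases y'V) => [->|[i1 y'i]].
  rewrite sum_vj1; case: (VHat_cases yV) => [->|[i0 yi]].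
    by rewrite eeh_vv big1 // => a _; rewrite ee_vv.
  rewrite (eeh_wv yi) (eq_bigr (fun=> l%:R^-1)); last by move=> a _; rewrite (ee_wv _ yi).
  rewrite sumr_const (_ : #|_| = l); last exact: card_ord.
  by rewrite -[l%:R^-1 *+ l]mulr_natl mulfV // natr_neq0.
rewrite (big_pred1 y'); last first.
  move=> x /=; case: (boolP (x \in VV)) => xV /=.
    case: (VV_cases xV) => [[a ->]|[i0 xi]].
      rewrite pi_v; apply/idP/idP => /eqP e.
        by move: (w_notv j1 y'i); rewrite e eqxx.
      by move: (w_notv a y'i); rewrite e eqxx.
    by rewrite (pi_w xi).
  apply/esym/negbTE; apply: contra xV => /eqP ->; exact: VV_w y'i.
case: (VHat_cases yV) => [->|[i0 yi]]; first by rewrite (eeh_vw y'i) (ee_vw _ y'i).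
by rewrite (eeh_ww yi y'i) (ee_ww yi y'i).
Qed.

Lemma card_VV : #|VV| = (#|VHat| + (l - 1))%N.
Proof.
set B := [set v j | j in [set j : 'I_l | j != j1]].
have BV : B \subset VV by apply/subsetP => x /imsetP[a _ ->]; exact: VV_v.
have cB : #|B| = (l - 1)%N.
  rewrite card_imset //; rewrite (eq_card (B := [set~ j1])) ?cardsC1 ?card_ord ?subn1 //.
  by move=> j; rewrite !inE.
rewrite /VHat cardsD (setIidPr BV) cB subnK // -cB; exact: subset_leq_card.
Qed.

Lemma deg_VV x : x \in VV -> (hg_deg HH x)%:R != 0 :> R.
Proof.
by case/VV_cases => [[a ->]|[i0 xi]]; rewrite ?deg_v ?(deg_w xi) natr_neq0.
Qed.

Lemma deg_VHat x : x \in VHat -> (hg_deg HHat x)%:R != 0 :> R.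
Proof.
by case/VHat_cases => [->|[i0 xi]]; rewrite ?degh_v ?(degh_w xi) natr_neq0.
Qed.

Lemma main_sec :
  char_poly (hg_L R VV HH) = ('X - 1) ^+ (l - 1) * char_poly (hg_L R VHat HHat).
Proof.
rewrite (hg_LE deg_VV) (hg_LE deg_VHat).
apply: (reduce (pi := pi)) => //; [ | exact: cond_a | exact: cond_b | exact: card_VV].
move=> x xV; case: (VV_cases xV) => [[a ->]|[i0 xi]]; first by rewrite pi_v VHat_v.
by rewrite (pi_w xi) (VHat_w xi).
Qed.

End Flower.

Theorem mainTheorem6 (R : realFieldType) (T : finType) (l r : nat)
    (l_gt0 : (0 < l)%N) (r_gt0 : (0 < r)%N)
    (v : 'I_l -> T) (hs : 'I_r -> {set T})
    (v_inj : injective v)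
    (hs_nonempty : forall i, hs i != set0)
    (hs_disj : forall i i', i != i' -> [disjoint hs i & hs i'])
    (v_notin_hs : forall i j, v j \notin hs i) :
  let j1 := Ordinal l_gt0 in
  let V := flower_V v hs in
  let H := flower_H v hs in
  let Vhat := V :\: [set v j | j in [set j : 'I_l | j != j1]] in
  let Hhat := [set h in H | [forall j : 'I_l, (j != j1) ==> (v j \notin h)]] in
  char_poly (hg_L R V H) = ('X - 1) ^+ (l - 1) * char_poly (hg_L R Vhat Hhat).
Proof.
intros; exact: (main_sec R l_gt0 r_gt0 v_inj hs_nonempty hs_disj v_notin_hs).
Qed.
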